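(* Let $M$ be a proper metric space, $X_1,\dots,X_n$ a coarsely transverse collection of half spaces, and for $0\le k\le n-1$ let $\mathcal{X}_k=\partial X_{k+1}\Cap\dots\Cap\partial X_n$, and $\mathcal{X}_n=\{M\}$. Then for every $0\le k\le n$, $\mathbf 1\wedge X_1\wedge\dots\wedge X_k\in CX^k_\alpha(\mathcal{X}_k)$.
   Context: Borel sets are identified with indicator functions; $\mathbf 1$ is the constant function. For $Y\subseteq M$, $Y_R=\{x:d(x,Y)\le R\}$. Coarsely transverse half spaces: Borel sets with $\bigcap_i (X_i)_R\cap(X_i^c)_R$ bounded for all $R$. A big family is a collection of subsets closed under subsets, finite unions and thickenings; $\{Y\}=\{Z:Z\subseteq Y_R\text{ for some }R\}$; $\mathcal{X}\Cap\mathcal{Y}=\{X\cap Y:X\in\mathcal X, Y\in\mathcal Y\}$; $\partial X=\{X\}\Cap\{X^c\}$; $\{M\}$ is the family of all subsets. For a big family $\mathcal{Y}$, $CX^k_\alpha(\mathcal{Y})$ is the space of anti-symmetric locally bounded Borel functions $\theta:M^{k+1}\to\mathbb{C}$ such that $\mathrm{supp}(\theta)\cap\Delta_R\cap Y^{k+1}$ is bounded for all $R>0$ and $Y\in\mathcal{Y}$, where $M^{k+1}$ has the max metric and $\Delta_R$ is the $R$-thickening of the multi-diagonal. $f_0\wedge\dots\wedge f_k=\sum_{\sigma\in S_{k+1}}\mathrm{sgn}(\sigma)f_{\sigma_0}\otimes\dots\otimes f_{\sigma_k}$. *)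

(* Defs.v *)
From HB Require Import structures.
From mathcomp Require Import all_boot all_order all_algebra all_fingroup.
From mathcomp Require Import boolp classical_sets.
From mathcomp Require Import Rstruct.
From mathcomp Require Import complex.
From Stdlib Require Import Rdefinitions.

Set Implicit Arguments.
Unset Strict Implicit.
Unset Printing Implicit Defensive.

Import Order.TTheory GRing.Theory Num.Theory.
Import ComplexField Normc.

Local Open Scope ring_scope.
Local Open Scope classical_set_scope.

Notation C := (Rdefinitions.R[i]).

Section GenericMetric.
Variables (T : Type) (d : T -> T -> R).

Definition is_metric : Prop :=
  [/\ forall x y, 0 <= d x y,
      forall x y, d x y = 0 <-> x = y,
      forall x y, d x y = d y x &
      forall x y z, d x z <= d x y + d y z].

Definition mball (x : T) (r : R) : set T := [set y | d x y < r].
Definition cball (x : T) (r : R) : set T := [set y | d x y <= r].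

Definition mopen (U : set T) : Prop :=
  forall x, U x -> exists2 r : R, 0 < r & mball x r `<=` U.

Definition mclosed (F : set T) : Prop := mopen (~` F).

Definition mcompact (K : set T) : Prop :=
  forall (I : Type) (U : I -> set T),
    (forall i, mopen (U i)) -> K `<=` \bigcup_i U i ->
    exists s : seq I, K `<=` (fun x => exists2 i, List.In i s & U i x).

Definition mproper : Prop := forall x r, mcompact (cball x r).

Definition mbounded (A : set T) : Prop :=
  exists r : R, forall x y, A x -> A y -> d x y <= r.

Definition is_sigma_algebra (S : set (set T)) : Prop :=
  [/\ S set0,
      forall A, S A -> S (~` A) &
      forall F : nat -> set T, (forall n, S (F n)) -> S (\bigcup_n F n)].

Definition borel (A : set T) : Prop :=
  forall S : set (set T), is_sigma_algebra S ->
    (forall U, mopen U -> S U) -> S A.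

(* Y_R = {x : d(x,Y) <= R}, with d(x,Y) = inf_{y in Y} d(x,y);
   "inf <= R" is written out as: for every eps > 0 some y in Y is
   within R + eps of x. *)
Definition thick (Y : set T) (r : R) : set T :=
  [set x | forall eps : R, 0 < eps -> exists2 y, Y y & d x y < r + eps].

Definition locally_bounded (f : T -> C) : Prop :=
  forall x, exists2 r : R, 0 < r &
    exists M : R, forall y, mball x r y -> normc (f y) <= M.

End GenericMetric.

Definition dC (z w : C) : R := normc (z - w).

Definition borel_fun (T : Type) (d : T -> T -> R) (f : T -> C) : Prop :=
  forall B : set C, borel dC B -> borel d (f @^-1` B).

Definition dprod (M : Type) (d : M -> M -> R) (k : nat)
    (x y : 'I_k.+1 -> M) : R :=
  \big[Num.max/0]_(i < k.+1) d (x i) (y i).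

Definition diagonal (M : Type) (k : nat) : set ('I_k.+1 -> M) :=
  [set x | exists m : M, forall i, x i = m].

Definition Delta (M : Type) (d : M -> M -> R) (k : nat) (r : R)
    : set ('I_k.+1 -> M) :=
  thick (@dprod M d k) (@diagonal M k) r.

Definition power_set (M : Type) (k : nat) (Y : set M) : set ('I_k.+1 -> M) :=
  [set x | forall i, Y (x i)].

Definition fsupp (T : Type) (f : T -> C) : set T := [set x | f x != 0].

Definition family (M : Type) := set (set M).

Definition fam_of (M : Type) (d : M -> M -> R) (Y : set M) : family M :=
  [set Z | exists r : R, Z `<=` thick d Y r].

Definition fam_cap (M : Type) (F G : family M) : family M :=
  [set Z | exists A, exists B, [/\ F A, G B & Z = A `&` B]].

Definition fam_boundary (M : Type) (d : M -> M -> R) (X : set M) : family M :=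
  fam_cap (fam_of d X) (fam_of d (~` X)).

Definition fam_all (M : Type) : family M := [set _ | True].

(* F j cap-cap F (j+1) cap-cap ... cap-cap F (j+len-1); the empty
   iterated intersection is {M} *)
Fixpoint fam_capn (M : Type) (F : nat -> family M) (j len : nat) : family M :=
  match len with
  | 0 => @fam_all M
  | 1 => F j
  | S l => fam_cap (F j) (fam_capn F j.+1 l)
  end.

(* X_k = partial X_{k+1} cap-cap ... cap-cap partial X_n  (k <= n-1),
   X_n = {M}; here X is indexed from 1 *)
Definition calX (M : Type) (d : M -> M -> R) (X : nat -> set M) (n k : nat)
    : family M :=
  fam_capn (fun i => fam_boundary d (X i)) k.+1 (n - k).

Definition coarsely_transverse (M : Type) (d : M -> M -> R)
    (X : nat -> set M) (n : nat) : Prop :=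
  (forall i : nat, (leq 1 i && leq i n) -> borel d (X i)) /\
  forall r : R, mbounded d
    [set x | forall i : nat, (leq 1 i && leq i n) ->
               thick d (X i) r x /\ thick d (~` X i) r x].

Definition CXalpha (M : Type) (d : M -> M -> R) (k : nat) (Y : family M)
    : set (('I_k.+1 -> M) -> C) :=
  [set theta |
    [/\
        forall (s : 'S_k.+1) (x : 'I_k.+1 -> M),
          theta (fun i => x (s i)) = (-1) ^+ s * theta x,
        locally_bounded (@dprod M d k) theta,
        borel_fun (@dprod M d k) theta &
        forall (r : R) (Z : set M), 0 < r -> Y Z ->
          mbounded (@dprod M d k)
            (fsupp theta `&` @Delta M d k r `&` @power_set M k Z)]].

Definition indic (T : Type) (A : set T) (x : T) : C := (`[< A x >])%:R.

Definition wedge (M : Type) (k : nat) (f : 'I_k.+1 -> M -> C)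
    (x : 'I_k.+1 -> M) : C :=
  \sum_(s : 'S_k.+1) (-1) ^+ s * \prod_(i < k.+1) f (s i) (x i).

Definition wedge_one_X (M : Type) (X : nat -> set M) (k : nat)
    : ('I_k.+1 -> M) -> C :=
  wedge (fun i : 'I_k.+1 => if i == ord0 then (fun _ => 1) else indic (X i)).

(* Main.v *)
Require Import Defs.
From mathcomp Require Import all_boot all_order all_algebra.
From mathcomp Require Import perm lra.
From mathcomp Require Import Rstruct classical_sets boolp complex.
Import ComplexField Normc.
From Stdlib Require Import Rdefinitions.
Import Order.TTheory GRing.Theory Num.Theory.
Set Implicit Arguments.
Unset Strict Implicit.
Local Open Scope ring_scope.
Local Open Scope classical_set_scope.

Lemma wedge_det (M : Type) (k : nat) (f : 'I_k.+1 -> M -> C) x :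
  wedge f x = \det (\matrix_(i, j) f j (x i)).
Proof.
rewrite /wedge /determinant; apply: eq_bigr => s _; congr (_ * _).
by apply: eq_bigr => i _; rewrite mxE.
Qed.

Lemma wedge_anti (M : Type) (k : nat) (f : 'I_k.+1 -> M -> C) (s : 'S_k.+1) x :
  wedge f (fun i => x (s i)) = (-1) ^+ s * wedge f x.
Proof.
rewrite !wedge_det -det_perm -det_mulmx -row_permE; congr (\det _).
by apply/matrixP => i j; rewrite !mxE.
Qed.

Lemma borel0 T (d : T -> T -> R) : borel d set0.
Proof. by move=> S [] . Qed.
Lemma borelC T (d : T -> T -> R) A : borel d A -> borel d (~` A).
Proof. move=> hA S hS hO; case: (hS) => _ hC _; exact: hC (hA S hS hO). Qed.
Lemma borelUn T (d : T -> T -> R) (F : nat -> set T) :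
  (forall n, borel d (F n)) -> borel d (\bigcup_n F n).
Proof. move=> hF S hS hO; case: (hS) => _ _ hU; apply: hU => n; exact: hF. Qed.
Lemma borelT T (d : T -> T -> R) : borel d setT.
Proof. rewrite -setC0; apply: borelC; exact: borel0. Qed.
Lemma borelU T (d : T -> T -> R) A B : borel d A -> borel d B -> borel d (A `|` B).
Proof.
move=> hA hB.
have -> : A `|` B = \bigcup_n (if n is 0 then A else B).
  apply/seteqP; split => x /=.
    by case=> h; [exists 0%N | exists 1%N].
  by case=> -[|n] _ h; [left|right].
by apply: borelUn => -[|n].
Qed.
Lemma borelI T (d : T -> T -> R) A B : borel d A -> borel d B -> borel d (A `&` B).
Proof.
move=> hA hB; rewrite -[A]setCK -[B]setCK -setCU; apply: borelC.
by apply: borelU; apply: borelC.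
Qed.
Lemma borel_bigU T (d : T -> T -> R) (I : eqType) (s : seq I) (F : I -> set T) :
  (forall i, borel d (F i)) -> borel d (fun x => exists2 i, i \in s & F i x).
Proof.
move=> hF; elim: s => [|a s IH].
  have -> : (fun x => exists2 i, i \in [::] & F i x) = set0 by apply/seteqP; split=> x //= [].
  exact: borel0.
have -> : (fun x => exists2 i, i \in a :: s & F i x) = F a `|` (fun x => exists2 i, i \in s & F i x).
  apply/seteqP; split => x /=.
    case=> i; rewrite in_cons => /orP [/eqP ->|hi] h; [by left| by right; exists i].
  by case=> [h|[i hi h]]; [exists a; rewrite ?mem_head | exists i; rewrite // in_cons hi orbT].
exact: borelU.
Qed.
Lemma borel_bigI T (d : T -> T -> R) (I : eqType) (s : seq I) (F : I -> set T) :
  (forall i, borel d (F i)) -> borel d (fun x => forall i, i \in s -> F i x).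
Proof.
move=> hF.
have -> : (fun x => forall i, i \in s -> F i x) = ~` (fun x => exists2 i, i \in s & (~` F i) x).
  apply/seteqP; split => x /=.
    by move=> h [i hi]; apply; apply: h.
  by move=> h i hi; apply: contrapT => hn; apply: h; exists i.
by apply: borelC; apply: borel_bigU => i; apply: borelC.
Qed.

Lemma borel_proj M (d : M -> M -> R) k (i : 'I_k.+1) A :
  borel d A -> borel (@dprod M d k) (fun x => A (x i)).
Proof.
move=> hA S hS hO.
pose S' := fun B : set M => S (fun x : 'I_k.+1 -> M => B (x i)).
have hS' : is_sigma_algebra S'.
  case: hS => h0 hC hU; split.
  - rewrite /S' /=.
    have -> : (fun x : 'I_k.+1 -> M => @set0 M (x i)) = set0 by apply/seteqP; split.
    exact: h0.
  - by move=> B hB; exact: hC.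
  - by move=> F hF; exact: hU.
apply: (hA S' hS') => U hUo; apply: hO.
move=> x hx; case: (hUo _ hx) => r r0 hr; exists r => // y hy; apply: hr.
rewrite /mball /= in hy *; apply: le_lt_trans hy.
exact: (le_bigmax _ (fun i0 => d (x i0) (y i0)) i).
Qed.

Definition phiX M (X : nat -> set M) k (x : 'I_k.+1 -> M)
  : {ffun 'I_k.+1 * 'I_k.+1 -> bool} :=
  [ffun p => (p.2 != ord0) && `[< X p.2 (x p.1) >]].
Definition Hv k (v : {ffun 'I_k.+1 * 'I_k.+1 -> bool}) : C :=
  \det (\matrix_(i, j) if j == ord0 then 1 else (v (i, j))%:R).

Lemma wedge_fact M (X : nat -> set M) k x : @wedge_one_X _ X k x = Hv (phiX X x).
Proof.
rewrite /wedge_one_X wedge_det /Hv; congr (\det _); apply/matrixP => i j.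
rewrite !mxE ffunE /=; case: (j == ord0) => //.
Qed.

Lemma borel_theta M (d : M -> M -> R) (X : nat -> set M) k :
  (forall j : 'I_k.+1, j != ord0 -> borel d (X j)) ->
  borel_fun (@dprod M d k) (@wedge_one_X M X k).
Proof.
move=> hX B _.
pose T := {ffun 'I_k.+1 * 'I_k.+1 -> bool}.
pose G (v : T) := fun x : 'I_k.+1 -> M =>
   B (Hv v) /\ (forall p, p \in enum {: 'I_k.+1 * 'I_k.+1} -> phiX X x p = v p).
have -> : @wedge_one_X M X k @^-1` B = (fun x => exists2 v, v \in enum T & G v x).
  apply/seteqP; split => x /=.
    move=> hx; exists (phiX X x); first by rewrite mem_enum.
    by split => //; rewrite -wedge_fact.
  case=> v _ [hB hv]; rewrite wedge_fact.
  suff -> : phiX X x = v by [].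
  by apply/ffunP => p; apply: hv; rewrite mem_enum.
apply: borel_bigU => v.
have hfib : borel (@dprod M d k)
   (fun x => forall p, p \in enum {: 'I_k.+1 * 'I_k.+1} -> phiX X x p = v p).
  apply: borel_bigI => -[i j].
  have [->|hj] := eqVneq j ord0.
    case: (v (i, ord0)).
      have -> : (fun x => phiX X x (i, ord0) = true) = set0.
        by apply/seteqP; split => x //=; rewrite ffunE /=.
      exact: borel0.
    have -> : (fun x => phiX X x (i, ord0) = false) = setT.
      by apply/seteqP; split => x //=; rewrite ffunE /=.
    exact: borelT.
  case: (v (i, j)).
    have -> : (fun x => phiX X x (i, j) = true) = (fun x => X j (x i)).
      apply/seteqP; split => x /=; rewrite ffunE /= hj /=.
        by move/asboolP.
      by move=> h; apply/asboolP.
    by apply: borel_proj; apply: hX.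
  have -> : (fun x => phiX X x (i, j) = false) = ~` (fun x => X j (x i)).
    apply/seteqP; split => x /=; rewrite ffunE /= hj /=.
      by move=> h hx; move: h; rewrite asboolT.
    by move=> h; apply/asboolP.
  by apply: borelC; apply: borel_proj; apply: hX.
case: (pselect (B (Hv v))) => hB.
  suff -> : G v = (fun x => forall p, p \in enum {: 'I_k.+1 * 'I_k.+1} -> phiX X x p = v p) by [].
  by apply/seteqP; split => x /=; [case | split].
suff -> : G v = set0 by apply: borel0.
by apply/seteqP; split => x //= [].
Qed.

Lemma thick_mono T (d : T -> T -> R) Y (r r' : R) x :
  r <= r' -> thick d Y r x -> thick d Y r' x.
Proof.
move=> hr h eps he; case: (h eps he) => y hy hd; exists y => //.
by apply: lt_le_trans hd _; rewrite lerD2r.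
Qed.

Lemma bound_thick T (d : T -> T -> R) Y Z :
  fam_boundary d Y Z -> exists r : R, forall x, Z x -> thick d Y r x /\ thick d (~` Y) r x.
Proof.
case=> A [B [[r1 h1] [r2 h2] ->]]; exists (Num.max r1 r2) => x [hA hB]; split.
  by apply: (thick_mono (r := r1)); [rewrite le_max lexx | apply: h1].
by apply: (thick_mono (r := r2)); [rewrite le_max lexx orbT | apply: h2].
Qed.

Lemma capn_thick T (d : T -> T -> R) (X : nat -> set T) len : forall j Z,
  fam_capn (fun i => fam_boundary d (X i)) j len Z ->
  exists r : R, forall i, leq j i && leq i.+1 (j + len) -> forall x, Z x ->
     thick d (X i) r x /\ thick d (~` X i) r x.
Proof.
elim: len => [|[|l] IH] j Z /=.
- by move=> _; exists 0 => i; rewrite addn0 => /andP [h1 h2]; move: (leq_trans h2 h1); rewrite ltnn.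
- move=> /bound_thick [r hr]; exists r => i; rewrite addn1 ltnS -eqn_leq => /eqP <-; exact: hr.
- case=> A [B [hA hB ->]].
  case: (bound_thick hA) => r1 h1; case: (IH _ _ hB) => r2 h2.
  exists (Num.max r1 r2) => i /andP [hji hij] x [xA xB].
  have [<-|hne] := eqVneq j i.
    by case: (h1 x xA) => ha hb; split; apply: (thick_mono (r := r1)); rewrite ?le_max ?lexx.
  have hi : leq j.+1 i && leq i.+1 (j.+1 + l.+1).
    by rewrite ltn_neqAle hne hji /= addSnnS.
  by case: (h2 i hi x xB) => ha hb; split; apply: (thick_mono (r := r2)); rewrite ?le_max ?lexx ?orbT.
Qed.

Lemma wedge_col_in M (X : nat -> set M) k (x : 'I_k.+1 -> M) (j : 'I_k.+1) :
  j != ord0 -> (forall i, X j (x i)) -> @wedge_one_X M X k x = 0.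
Proof.
move=> hj hx; rewrite /wedge_one_X wedge_det -det_tr.
apply: (determinant_alternate (i1 := ord0) (i2 := j)); first by rewrite eq_sym.
by move=> i; rewrite !mxE /= (negbTE hj) /indic (asboolT (hx i)).
Qed.

Lemma wedge_col_out M (X : nat -> set M) k (x : 'I_k.+1 -> M) (j : 'I_k.+1) :
  j != ord0 -> (forall i, ~ X j (x i)) -> @wedge_one_X M X k x = 0.
Proof.
move=> hj hx; rewrite /wedge_one_X wedge_det -det_tr (expand_det_row _ j).
by apply: big1 => i _; rewrite !mxE (negbTE hj) /indic asboolF // mul0r.
Qed.

Local Close Scope classical_set_scope.
Local Close Scope ring_scope.
Theorem lemma5p1 (M : Type) (d : M -> M -> R) (n : nat) (X : nat -> set M) :
  is_metric d -> mproper d ->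
  coarsely_transverse d X n ->
  forall k : nat, (k <= n)%N ->
    @CXalpha M d k (calX d X n k) (@wedge_one_X M X k).
Proof.
Local Open Scope ring_scope.
Local Open Scope classical_set_scope.
move=> [d0 d00 dsym dtri] _ [hXb hT] k hk.
have hX : forall j : 'I_k.+1, j != ord0 -> borel d (X j).
  move=> j hj; apply: hXb; apply/andP; split.
    rewrite lt0n; apply: contra hj => /eqP h; apply/eqP; exact: val_inj.
  by apply: leq_trans hk; rewrite -ltnS.
split.
- by move=> s x; exact: wedge_anti.
- move=> x; exists 1; first exact: ltr01.
  exists (\big[Num.max/0]_(v : {ffun 'I_k.+1 * 'I_k.+1 -> bool}) normc (Hv v)) => y _.
  rewrite wedge_fact; exact: (le_bigmax _ (fun v => normc (Hv v))).
- exact: borel_theta.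
move=> r Z r0 hZ.
case: (capn_thick hZ) => rZ hrZ.
pose R0 := Num.max rZ (r + 1 + (r + 1)).
have hR0 : r + 1 + (r + 1) <= R0 by rewrite le_max lexx orbT.
have hRZ : rZ <= R0 by rewrite le_max lexx.
case: (hT R0) => b hb.
have key : forall x, (fsupp (@wedge_one_X M X k) `&` @Delta M d k r `&` @power_set M k Z) x ->
   (forall j : nat, (leq 1 j && leq j n) ->
       thick d (X j) R0 (x ord0) /\ thick d (~` X j) R0 (x ord0)) /\
   forall i, d (x i) (x ord0) <= r + 1 + (r + 1).
  move=> x [[hsupp hdel] hpow].
  case: (hdel 1 ltr01) => y [m hm] hdy.
  have hxm : forall i, d (x i) m < r + 1.
    move=> i; rewrite -(hm i); apply: le_lt_trans hdy.
    exact: (le_bigmax _ (fun i0 => d (x i0) (y i0)) i).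
  have hxi : forall i, d (x i) (x ord0) <= r + 1 + (r + 1).
    move=> i; apply: le_trans (dtri _ m _) _; rewrite (dsym m).
    have := hxm i; have := hxm ord0; lra.
  split => // j /andP [h1 h2].
  case: (leqP j k) => hjk.
  - have hjk' : leq j.+1 k.+1 by rewrite ltnS.
    pose J := Ordinal hjk'.
    have hJ : J != ord0.
      apply/eqP => /(congr1 val) /= h; move: h1; rewrite h.
      done.
    have [i1 hi1] : exists i, X j (x i).
      apply: contrapT => hn; move/eqP: hsupp; apply.
      apply: (wedge_col_out (j := J)) => // i hi; apply: hn; by exists i.
    have [i2 hi2] : exists i, ~ X j (x i).
      apply: contrapT => hn; move/eqP: hsupp; apply.
      apply: (wedge_col_in (j := J)) => // i; apply: contrapT => hi; apply: hn; by exists i.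
    split => eps he; [exists (x i1) | exists (x i2)] => //; rewrite dsym;
      have := hxi (if true then _ else _); move: (hxi i1) (hxi i2) => ha hb'; lra.
  - have hj : leq k.+1 j && leq j.+1 (k.+1 + (n - k)).
      by rewrite hjk /= addSn subnKC.
    case: (hrZ j hj (x ord0) (hpow ord0)) => ha hb'.
    by split; apply: (thick_mono (r := rZ)).
exists (r + 1 + (r + 1) + b + (r + 1 + (r + 1))) => x y hx hy.
case: (key x hx) => hx0 hxi; case: (key y hy) => hy0 hyi.
have hb0 := hb _ _ hx0 hx0.
have hbxy := hb _ _ hx0 hy0.
have := d0 (x ord0) (x ord0) => hd0.
rewrite /dprod; apply: bigmax_le => [|i _]; first lra.
apply: le_trans (dtri _ (x ord0) _) _.
apply: le_trans (lerD (lexx _) (dtri _ (y ord0) _)) _.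
rewrite (dsym _ (y i)); have := hxi i; have := hyi i; lra.
Qed.
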